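(* Restriction along the inclusion $\mathcal{S}_q\hookrightarrow\mathrm{Sp}(\mathcal{E}_q^{deg})$ induces an equivalence of categories $\mathcal{F}_{iso}\simeq\mathrm{Func}(\mathcal{S}_q,\mathcal{E})$.
   Context: $\mathcal{E}$ is the category of all $\mathbb{F}_2$-vector spaces. $\mathcal{E}_q^{deg}$: objects finite-dimensional quadratic spaces over $\mathbb{F}_2$ (possibly degenerate), morphisms injective linear maps preserving the forms; it has pullbacks. $\mathrm{Sp}(\mathcal{E}_q^{deg})$: same objects; morphisms are spans $[V\leftarrow D\rightarrow W]$ up to isomorphism of $D$, composed by pullback. $\mathcal{F}_{iso}=\mathrm{Func}(\mathrm{Sp}(\mathcal{E}_q^{deg}),\mathcal{E})$. $\mathcal{S}_q$ is the full subcategory of $\mathrm{Sp}(\mathcal{E}_q^{deg})$ whose objects are the non-degenerate quadratic spaces (those whose polar bilinear form $q(x+y)+q(x)+q(y)$ has trivial radical). *)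

(* Defs.v *)
From HB Require Import structures.
From mathcomp Require Import all_boot all_order all_algebra.
Unset Printing Implicit Defensive.
Import GRing.Theory.
Local Open Scope ring_scope.

Notation F2 := 'F_2.

Definition polar n (q : 'rV[F2]_n -> F2) (x y : 'rV[F2]_n) : F2 :=
  q (x + y) + q x + q y.
Arguments polar {n}.

(* q is a quadratic form: q(a x) = a^2 q(x) and its polar form is bilinear
   (bilinearity in the second variable follows from symmetry). *)
Definition is_quadratic n (q : 'rV[F2]_n -> F2) : Prop :=
  (forall (a : F2) x, q (a *: x) = a ^+ 2 * q x) /\
  (forall (a : F2) x y z, polar q (a *: x + y) z = a * polar q x z + polar q y z).
Arguments is_quadratic {n}.

Record qspace := QSpace {
  qdim : nat;
  qform : 'rV[F2]_qdim -> F2;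
  qformP : is_quadratic qform }.

Definition nondeg (V : qspace) : Prop :=
  forall x : 'rV[F2]_(qdim V), (forall y, polar (qform V) x y = 0) -> x = 0.

(* morphisms of E_q^deg: injective linear maps x |-> x *m M preserving forms *)
Record qmor (V W : qspace) := QMor {
  qmx : 'M[F2]_(qdim V, qdim W);
  qmx_inj : forall x y : 'rV[F2]_(qdim V), x *m qmx = y *m qmx -> x = y;
  qmx_isom : forall x, qform W (x *m qmx) = qform V x }.
Arguments qmx {V W}.
Arguments QMor {V W}.

Lemma qid_inj (V : qspace) :
  forall x y : 'rV[F2]_(qdim V), x *m 1%:M = y *m 1%:M -> x = y.
Proof. by move=> x y; rewrite !mulmx1. Qed.

Lemma qid_isom (V : qspace) :
  forall x : 'rV[F2]_(qdim V), qform V (x *m 1%:M) = qform V x.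
Proof. by move=> x; rewrite mulmx1. Qed.

Definition qid (V : qspace) : qmor V V := QMor (1%:M) (@qid_inj V) (@qid_isom V).

Definition is_pullback {A B W P : qspace} (f : qmor A W) (g : qmor B W)
  (p : qmor P A) (p' : qmor P B) : Prop :=
  qmx p *m qmx f = qmx p' *m qmx g /\
  forall (Q : qspace) (a : qmor Q A) (b : qmor Q B),
    qmx a *m qmx f = qmx b *m qmx g ->
    exists u : qmor Q P,
      [/\ qmx u *m qmx p = qmx a, qmx u *m qmx p' = qmx b &
          forall u' : qmor Q P, qmx u' *m qmx p = qmx a ->
                     qmx u' *m qmx p' = qmx b -> qmx u' = qmx u].

Record span (V W : qspace) := Span {
  sapex : qspace;
  sleft : qmor sapex V;
  sright : qmor sapex W }.
Arguments sapex {V W}.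
Arguments sleft {V W}.
Arguments sright {V W}.
Arguments Span {V W}.

(* spans identified up to isomorphism of the apex *)
Definition span_equiv {V W : qspace} (s t : span V W) : Prop :=
  exists (phi : qmor (sapex s) (sapex t)) (psi : qmor (sapex t) (sapex s)),
    [/\ qmx phi *m qmx psi = 1%:M, qmx psi *m qmx phi = 1%:M,
        qmx phi *m qmx (sleft t) = qmx (sleft s) &
        qmx phi *m qmx (sright t) = qmx (sright s)].

Definition span_id (V : qspace) : span V V := Span V (qid V) (qid V).

(* u is (a representative of) the composite t o s, computed by pullback *)
Definition span_comp_of {U V W : qspace} (s : span U V) (t : span V W) (u : span U W) : Prop :=
  exists (p : qmor (sapex u) (sapex s)) (p' : qmor (sapex u) (sapex t)),
    [/\ is_pullback (sright s) (sleft t) p p',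
        qmx p *m qmx (sleft s) = qmx (sleft u) &
        qmx p' *m qmx (sright t) = qmx (sright u)].

Record qobj (P : qspace -> Prop) := QObj { qo :> qspace; qoP : P qo }.
Arguments qo {P}.
Arguments QObj P qo qoP.

Record qfunctor (P : qspace -> Prop) := QFunctor {
  fobj : qobj P -> lmodType F2;
  fmor : forall A B : qobj P, span A B -> fobj A -> fobj B;
  fmor_lin : forall (A B : qobj P) (s : span A B) (a : F2) x y,
      fmor A B s (a *: x + y) = a *: fmor A B s x + fmor A B s y;
  fmor_equiv : forall (A B : qobj P) (s t : span A B),
      span_equiv s t -> forall x, fmor A B s x = fmor A B t x;
  fmor_id : forall (A : qobj P) x, fmor A A (span_id A) x = x;
  fmor_comp : forall (A B C : qobj P) (s : span A B) (t : span B C) (u : span A C),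
      span_comp_of s t u -> forall x, fmor A C u x = fmor B C t (fmor A B s x) }.
Arguments fobj {P}.
Arguments fmor {P} q {A B}.
Arguments QFunctor P : clear implicits.

Record qnat P (F G : qfunctor P) := QNat {
  ncomp : forall A : qobj P, fobj F A -> fobj G A;
  ncomp_lin : forall (A : qobj P) (a : F2) x y,
      ncomp A (a *: x + y) = a *: ncomp A x + ncomp A y;
  ncomp_nat : forall (A B : qobj P) (s : span A B) x,
      ncomp B (fmor F s x) = fmor G s (ncomp A x) }.
Arguments qnat {P}.
Arguments ncomp {P F G}.
Arguments QNat {P} F G ncomp ncomp_lin ncomp_nat.

Definition qnat_iso {P} (F G : qfunctor P) : Prop :=
  exists (eta : qnat F G) (eps : qnat G F),
    (forall A x, ncomp eps A (ncomp eta A x) = x) /\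
    (forall A x, ncomp eta A (ncomp eps A x) = x).

(* F_iso = Func(Sp(E_q^deg), E) and Func(S_q, E) *)
Definition allq : qspace -> Prop := fun _ => True.
Definition Fiso := qfunctor allq.
Definition FuncSq := qfunctor nondeg.

Definition incl (A : qobj nondeg) : qobj allq := @QObj allq (qo A) I.

Definition res (F : Fiso) : FuncSq :=
  @QFunctor nondeg (fun A => fobj F (incl A))
    (fun A B s => @fmor _ F (incl A) (incl B) s)
    (fun A B s => @fmor_lin _ F (incl A) (incl B) s)
    (fun A B s t => @fmor_equiv _ F (incl A) (incl B) s t)
    (fun A => @fmor_id _ F (incl A))
    (fun A B C s t u => @fmor_comp _ F (incl A) (incl B) (incl C) s t u).

Definition res_nat {F G : Fiso} (eta : qnat F G) : qnat (res F) (res G) :=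
  @QNat _ (res F) (res G) (fun A => ncomp eta (incl A))
    (fun A => @ncomp_lin _ F G eta (incl A))
    (fun A B s => @ncomp_nat _ F G eta (incl A) (incl B) s).

(* Main.v *)
From Pilot Require Import Defs.
From HB Require Import structures.
From mathcomp Require Import all_boot all_order all_algebra.
From mathcomp Require Import ring.
Import Pilot.Defs.
Import GRing.Theory.
Local Open Scope ring_scope.

Lemma F2xx (x : 'F_2) : x + x = 0.
Proof. case: x => [[|[|k]]] Hk; apply: val_inj => //. Qed.

Lemma qmx_injM {V W : qspace} (f : qmor V W) k (M N : 'M[F2]_(k, qdim V)) :
  M *m qmx f = N *m qmx f -> M = N.
Proof.
move=> e; apply/row_matrixP => i; apply: (@qmx_inj _ _ f).
by rewrite -!row_mul e.
Qed.

Lemma qcomp_inj {U V W : qspace} (f : qmor U V) (g : qmor V W) :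
  forall x y : 'rV[F2]_(qdim U), x *m (qmx f *m qmx g) = y *m (qmx f *m qmx g) -> x = y.
Proof. by move=> x y; rewrite !mulmxA => /(@qmx_inj _ _ g) /(@qmx_inj _ _ f). Qed.

Lemma qcomp_isom {U V W : qspace} (f : qmor U V) (g : qmor V W) :
  forall x, qform W (x *m (qmx f *m qmx g)) = qform U x.
Proof. by move=> x; rewrite mulmxA !qmx_isom. Qed.

Definition qcomp {U V W : qspace} (f : qmor U V) (g : qmor V W) : qmor U W :=
  QMor (qmx f *m qmx g) (qcomp_inj f g) (qcomp_isom f g).

Lemma PB1 {D C W : qspace} (h : qmor D C) (g : qmor C W) (f : qmor D W) :
  qmx f = qmx h *m qmx g -> is_pullback f g (qid D) h.
Proof.
move=> ef; split; first by rewrite /= mul1mx.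
move=> Q a b eab; exists a; split => //=; first by rewrite mulmx1.
  by apply: (qmx_injM g); rewrite -mulmxA -ef.
by move=> u'; rewrite mulmx1.
Qed.

Lemma PB1sym {D C W : qspace} (h : qmor D C) (g : qmor C W) (f : qmor D W) :
  qmx f = qmx h *m qmx g -> is_pullback g f h (qid D).
Proof.
move=> ef; split; first by rewrite /= mul1mx.
move=> Q b a eab; exists a; split => //=; last by move=> u' _; rewrite mulmx1.
  by apply: (qmx_injM g); rewrite -mulmxA -ef.
by rewrite mulmx1.
Qed.

Lemma PBcomp {A B W W' P : qspace} (f : qmor A W) (g : qmor B W) (k : qmor W W')
  (p : qmor P A) (p' : qmor P B) :
  is_pullback f g p p' -> is_pullback (qcomp f k) (qcomp g k) p p'.
Proof.
case=> e u; split; first by rewrite /= !mulmxA e.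
move=> Q a b eab; apply: u; apply: (qmx_injM k); by rewrite -!mulmxA.
Qed.

Definition dot n (x y : 'rV[F2]_n) : F2 := (x *m y^T) 0 0.
Arguments dot {n}.

Lemma dotDl n (a : F2) (x y z : 'rV[F2]_n) : dot (a *: x + y) z = a * dot x z + dot y z.
Proof. by rewrite /dot mulmxDl -scalemxAl !mxE. Qed.
Lemma dotDr n (a : F2) (x y z : 'rV[F2]_n) : dot x (a *: y + z) = a * dot x y + dot x z.
Proof. by rewrite /dot linearD linearZ /= mulmxDr -scalemxAr !mxE. Qed.
Lemma dot0l n (z : 'rV[F2]_n) : dot 0 z = 0.
Proof. by rewrite /dot mul0mx mxE. Qed.
Lemma dot0r n (z : 'rV[F2]_n) : dot z 0 = 0.
Proof. by rewrite /dot trmx0 mulmx0 mxE. Qed.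
Lemma dotZl n (a : F2) (x z : 'rV[F2]_n) : dot (a *: x) z = a * dot x z.
Proof. by rewrite -[a *: x]addr0 dotDl dot0l addr0. Qed.
Lemma dotZr n (a : F2) (x z : 'rV[F2]_n) : dot x (a *: z) = a * dot x z.
Proof. by rewrite -[a *: z]addr0 dotDr dot0r addr0. Qed.
Lemma dotD1 n (x y z : 'rV[F2]_n) : dot (x + y) z = dot x z + dot y z.
Proof. by have := @dotDl _ 1 x y z; rewrite scale1r mul1r. Qed.
Lemma dotD2 n (x y z : 'rV[F2]_n) : dot z (x + y) = dot z x + dot z y.
Proof. by have := @dotDr _ 1 z x y; rewrite scale1r mul1r. Qed.

Definition hform n (q : 'rV[F2]_n -> F2) (z : 'rV[F2]_(n + n)) : F2 :=
  q (lsubmx z) + dot (lsubmx z) (rsubmx z).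
Arguments hform {n}.

Lemma polar_hform n (q : 'rV[F2]_n -> F2) u w :
  polar (hform q) u w = polar q (lsubmx u) (lsubmx w) + dot (lsubmx u) (rsubmx w)
     + dot (lsubmx w) (rsubmx u).
Proof.
rewrite /polar /hform !linearD /= dotD1 !dotD2.
set a := dot _ _; set b := dot _ _; set c := dot _ _; set d := dot _ _.
set q1 := q _; set q2 := q _; set q3 := q _.
have -> : q1 + (a + b + (c + d)) + (q2 + a) + (q3 + d) =
   q1 + q2 + q3 + b + c + (a + a) + (d + d) by ring.
by rewrite !F2xx !addr0.
Qed.

Lemma quad0 n (q : 'rV[F2]_n -> F2) : is_quadratic q -> q 0 = 0.
Proof. by case=> h1 _; have := h1 0 0; rewrite scale0r expr2 !mul0r. Qed.

Lemma hform_quad n (q : 'rV[F2]_n -> F2) : is_quadratic q -> is_quadratic (hform q).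
Proof.
move=> hq; have [h1 h2] := hq; split.
  move=> a x; rewrite /hform !linearZ /= h1 dotZl dotZr.
  by rewrite expr2 mulrDr !mulrA.
move=> a x y z; rewrite !polar_hform !linearD !linearZ /= h2 !dotDl !dotDr; ring.
Qed.

Lemma dot_delta n (x : 'rV[F2]_n) i : dot x (delta_mx 0 i) = x 0 i.
Proof. by rewrite /dot trmx_delta -colE mxE. Qed.

Lemma dot_deltal n (x : 'rV[F2]_n) i : dot (delta_mx 0 i) x = x 0 i.
Proof. by rewrite /dot -rowE !mxE. Qed.

Lemma hform_nondeg n (q : 'rV[F2]_n -> F2) : is_quadratic q ->
  forall x, (forall y, polar (hform q) x y = 0) -> x = 0.
Proof.
move=> hq x h.
have hl : lsubmx x = 0.
  apply/rowP => i; have := h (row_mx 0 (delta_mx 0 i)).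
  by rewrite polar_hform row_mxKl row_mxKr dot_delta dot0l /polar !addr0 F2xx quad0 // !add0r => ->; rewrite mxE.
have hr : rsubmx x = 0.
  apply/rowP => i; have := h (row_mx (delta_mx 0 i) 0).
  rewrite polar_hform row_mxKl row_mxKr dot0r hl dot_deltal /polar add0r.
  by rewrite quad0 // !addr0 F2xx add0r => ->; rewrite mxE.
by rewrite -[x]hsubmxK hl hr row_mx0.
Qed.

Definition hull (V : qspace) : qspace :=
  QSpace (qdim V + qdim V) (hform (qform V)) (@hform_quad _ _ (qformP V)).

Lemma hj_inj (V : qspace) : forall x y : 'rV[F2]_(qdim V),
  x *m (row_mx 1%:M 0 : 'M_(qdim V, qdim (hull V))) = y *m row_mx 1%:M 0 -> x = y.
Proof. by move=> x y; rewrite !mul_mx_row !mulmx1 !mulmx0 => /eq_row_mx []. Qed.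

Lemma hj_isom (V : qspace) : forall x : 'rV[F2]_(qdim V),
  qform (hull V) (x *m (row_mx 1%:M 0 : 'M_(qdim V, qdim (hull V)))) = qform V x.
Proof.
by move=> x; rewrite /= /hform mul_mx_row mulmx1 mulmx0 row_mxKl row_mxKr dot0r addr0.
Qed.

Definition hj (V : qspace) : qmor V (hull V) := QMor _ (@hj_inj V) (@hj_isom V).

Definition Hobj (V : qspace) : qobj nondeg :=
  QObj nondeg (hull V) (@hform_nondeg _ _ (qformP V)).

Definition iV (V : qspace) : span V (hull V) := Span V (qid V) (hj V).
Definition pV (V : qspace) : span (hull V) V := Span V (hj V) (qid V).
Definition ext {V W : qspace} (s : span V W) : span (hull V) (hull W) :=
  Span (sapex s) (qcomp (sleft s) (hj V)) (qcomp (sright s) (hj W)).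
Definition extl {V W : qspace} (s : span V W) : span (hull V) W :=
  Span (sapex s) (qcomp (sleft s) (hj V)) (sright s).
Definition ir {V W : qspace} (s : span V W) : span V (hull W) :=
  Span (sapex s) (sleft s) (qcomp (sright s) (hj W)).
Definition eV (V : qspace) := ext (span_id V).

Lemma L_pi V : span_comp_of (iV V) (pV V) (span_id V).
Proof.
exists (qid V), (qid V); split => /=; last 2 first.
- by rewrite mulmx1. - by rewrite mulmx1.
by apply: PB1 => /=; rewrite mul1mx.
Qed.

Lemma L_ip V : span_comp_of (pV V) (iV V) (eV V).
Proof.
exists (qid V), (qid V); split => //=.
by apply: PB1 => /=; rewrite mul1mx.
Qed.

Lemma L_ie V : span_comp_of (iV V) (eV V) (iV V).
Proof.
exists (qid V), (qid V); split => /=; last 2 first.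
- by rewrite mulmx1. - by rewrite !mul1mx.
by apply: PB1 => /=; rewrite !mul1mx.
Qed.

Lemma L_eext {V W} (u : span V W) : span_comp_of (ext u) (eV W) (ext u).
Proof.
exists (qid _), (sright u); split => /=; last 2 first.
- by rewrite mul1mx. - by rewrite mul1mx.
by apply: PB1 => /=; rewrite mul1mx.
Qed.

Lemma L_ext_comp {U V W} (s : span U V) (t : span V W) (u : span U W) :
  span_comp_of s t u -> span_comp_of (ext s) (ext t) (ext u).
Proof.
case=> p [p' [pb el er]]; exists p, p'; split => /=.
- exact: PBcomp.
- by rewrite mulmxA el.
- by rewrite mulmxA er.
Qed.

Lemma L_pext {V W} (s : span V W) : span_comp_of (ext s) (pV W) (extl s).
Proof.
exists (qid _), (sright s); split => /=; last 2 first.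
- by rewrite mul1mx. - by rewrite mulmx1.
by apply: PB1.
Qed.

Lemma L_sp {V W} (s : span V W) : span_comp_of (pV V) s (extl s).
Proof.
exists (sleft s), (qid _); split => //=; last by rewrite mul1mx.
by apply: PB1sym => /=; rewrite mulmx1.
Qed.

Lemma L_is {V W} (s : span V W) : span_comp_of s (iV W) (ir s).
Proof.
exists (qid _), (sright s); split => /=.
- by apply: PB1 => /=; rewrite mulmx1.
- by rewrite mul1mx.
- by [].
Qed.

Lemma L_ei {V W} (s : span V W) : span_comp_of (iV V) (ext s) (ir s).
Proof.
exists (sleft s), (qid _); split => /=.
- by apply: PB1sym.
- by rewrite mulmx1.
- by rewrite mul1mx.
Qed.

Lemma ext_equiv {V W} (s t : span V W) : span_equiv s t -> span_equiv (ext s) (ext t).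
Proof.
case=> phi [psi [h1 h2 h3 h4]]; exists phi, psi; split => //=.
- by rewrite mulmxA h3.
- by rewrite mulmxA h4.
Qed.

Section Fix.
Variables (M : lmodType F2) (e : M -> M).
Definition linP := forall (a : F2) x y, e (a *: x + y) = a *: e x + e y.
End Fix.
Arguments linP {M}.

Definition fixT (M : lmodType F2) (e : M -> M) (el : linP e) := {x : M | e x == x}.
Arguments fixT {M e}.

HB.instance Definition _ M e el := Choice.on (@fixT M e el).

Section FixOps.
Variables (M : lmodType F2) (e : M -> M) (el : linP e).
Lemma e0 : e 0 = 0.
Proof. have := el 1 0 0; rewrite scale1r !addr0 scale1r => h.
 by apply: (@addrI _ (e 0)); rewrite addr0 -h. Qed.
Lemma eD x y : e (x + y) = e x + e y.
Proof. by have := el 1 x y; rewrite !scale1r. Qed.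
Lemma eZ a x : e (a *: x) = a *: e x.
Proof. by rewrite -[a *: x]addr0 el e0 addr0. Qed.
Lemma eN x : e (- x) = - e x.
Proof. by rewrite -scaleN1r eZ scaleN1r. Qed.
Definition fz : fixT el := exist _ 0 (introT eqP e0).
Definition fadd (x y : fixT el) : fixT el :=
  exist _ (val x + val y) (introT eqP (etrans (eD _ _) (congr2 +%R (eqP (valP x)) (eqP (valP y))))).
Definition fopp (x : fixT el) : fixT el :=
  exist _ (- val x) (introT eqP (etrans (eN _) (congr1 -%R (eqP (valP x))))).
Definition fscale (a : F2) (x : fixT el) : fixT el :=
  exist _ (a *: val x) (introT eqP (etrans (eZ _ _) (congr1 (GRing.scale a) (eqP (valP x))))).
Lemma faddA : associative fadd. Proof. by move=> x y z; apply: val_inj; rewrite /= addrA. Qed.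
Lemma faddC : commutative fadd. Proof. by move=> x y; apply: val_inj; rewrite /= addrC. Qed.
Lemma fadd0 : left_id fz fadd. Proof. by move=> x; apply: val_inj; rewrite /= add0r. Qed.
Lemma faddN : left_inverse fz fopp fadd. Proof. by move=> x; apply: val_inj; rewrite /= addNr. Qed.
Lemma fscaleA a b v : fscale a (fscale b v) = fscale (a * b) v.
Proof. by apply: val_inj; rewrite /= scalerA. Qed.
Lemma fscale1 : left_id 1 fscale. Proof. by move=> x; apply: val_inj; rewrite /= scale1r. Qed.
Lemma fscaleDr : right_distributive fscale fadd.
Proof. by move=> a x y; apply: val_inj; rewrite /= scalerDr. Qed.
Lemma fscaleDl v : {morph fscale^~ v: a b / a + b >-> fadd a b}.
Proof. by move=> a b; apply: val_inj; rewrite /= scalerDl. Qed.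
End FixOps.

HB.instance Definition _ M e el := GRing.isZmodule.Build (@fixT M e el)
  (@faddA M e el) (@faddC M e el) (@fadd0 M e el) (@faddN M e el).
HB.instance Definition _ M e el := GRing.Zmodule_isLmodule.Build F2 (@fixT M e el)
  (@fscaleA M e el) (@fscale1 M e el) (@fscaleDr M e el) (@fscaleDl M e el).


Section Ess.
Variable H : FuncSq.

Definition EH (V : qspace) : fobj H (Hobj V) -> fobj H (Hobj V) :=
  @fmor _ H (Hobj V) (Hobj V) (eV V).
Lemma elH V : linP (EH V).
Proof. move=> a x y; exact: (@fmor_lin _ H (Hobj V) (Hobj V) (eV V) a x y). Qed.

Definition FT (V : qspace) : lmodType F2 := fixT (elH V).

Lemma Fmor_fix {V W : qspace} (s : span V W) (y : fobj H (Hobj V)) :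
  EH W (@fmor _ H (Hobj V) (Hobj W) (ext s) y) == @fmor _ H (Hobj V) (Hobj W) (ext s) y.
Proof.
apply/eqP; symmetry.
exact: (@fmor_comp _ H (Hobj V) (Hobj W) (Hobj W) (ext s) (eV W) (ext s) (L_eext s)).
Qed.

Definition Fmor {V W : qspace} (s : span V W) (x : FT V) : FT W :=
  exist _ (@fmor _ H (Hobj V) (Hobj W) (ext s) (val x)) (Fmor_fix s (val x)).

Lemma Fmor_lin (A B : qobj allq) (s : span A B) (a : F2) (x y : FT A) :
  Fmor s (a *: x + y) = a *: Fmor s x + Fmor s y.
Proof. apply: val_inj; exact: (@fmor_lin _ H (Hobj A) (Hobj B) (ext s)). Qed.

Lemma Fmor_equiv (A B : qobj allq) (s t : span A B) :
  span_equiv s t -> forall x, Fmor s x = Fmor t x.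
Proof.
move=> e x; apply: val_inj => /=.
exact: (@fmor_equiv _ H (Hobj A) (Hobj B) (ext s) (ext t) (ext_equiv s t e) (val x)).
Qed.

Lemma Fmor_id (A : qobj allq) (x : FT A) : Fmor (span_id A) x = x.
Proof. by apply: val_inj => /=; apply/eqP; exact: (valP x). Qed.

Lemma Fmor_comp (A B C : qobj allq) (s : span A B) (t : span B C) (u : span A C) :
  span_comp_of s t u -> forall x, Fmor u x = Fmor t (Fmor s x).
Proof.
move=> h x; apply: val_inj => /=.
exact: (@fmor_comp _ H (Hobj A) (Hobj B) (Hobj C) _ _ _ (L_ext_comp s t u h) (val x)).
Qed.

Definition Fext : Fiso :=
  QFunctor allq (fun A => FT A) (fun A B s => @Fmor A B s) Fmor_lin Fmor_equiv Fmor_id Fmor_comp.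

End Ess.

Section Full.
Variables (F G : Fiso) (theta : qnat (res F) (res G)).

Definition fc (A : qobj allq) (x : fobj F A) : fobj G A :=
  @fmor _ G (incl (Hobj A)) A (pV A)
    (ncomp theta (Hobj A) (@fmor _ F A (incl (Hobj A)) (iV A) x)).

Lemma fc_lin (A : qobj allq) (a : F2) x y : fc A (a *: x + y) = a *: fc A x + fc A y.
Proof. by rewrite /fc !fmor_lin ncomp_lin fmor_lin. Qed.

Lemma fc_nat (A B : qobj allq) (s : span A B) x : fc B (fmor F s x) = fmor G s (fc A x).
Proof.
rewrite /fc.
have e1 : @fmor _ F B (incl (Hobj B)) (iV B) (fmor F s x) =
          @fmor _ F (incl (Hobj A)) (incl (Hobj B)) (ext s) (@fmor _ F A (incl (Hobj A)) (iV A) x).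
  rewrite -(@fmor_comp _ F A B (incl (Hobj B)) s (iV B) (ir s) (L_is s)).
  by rewrite -(@fmor_comp _ F A (incl (Hobj A)) (incl (Hobj B)) (iV A) (ext s) (ir s) (L_ei s)).
rewrite e1.
have e2 := @ncomp_nat _ _ _ theta (Hobj A) (Hobj B) (ext s).
rewrite /= in e2; rewrite e2.
rewrite -(@fmor_comp _ G (incl (Hobj A)) (incl (Hobj B)) B (ext s) (pV B) (extl s) (L_pext s)).
by rewrite -(@fmor_comp _ G (incl (Hobj A)) A B (pV A) s (extl s) (L_sp s)).
Qed.

Definition fullnat : qnat F G := QNat F G fc fc_lin fc_nat.

Lemma fullnat_res (A : qobj nondeg) x : ncomp (res_nat fullnat) A x = ncomp theta A x.
Proof.
rewrite /= /fc.
have e2 := @ncomp_nat _ _ _ theta (Hobj A) A (pV A).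
rewrite /= in e2; rewrite -e2.
congr (ncomp theta A _).
rewrite -(@fmor_comp _ F (incl A) (incl (Hobj A)) (incl A) (iV A) (pV A) (span_id A) (L_pi A)).
by rewrite fmor_id.
Qed.
End Full.

Section EssIso.
Variable H : FuncSq.

Definition ec (A : qobj nondeg) (x : fobj (res (Fext H)) A) : fobj H A :=
  @fmor _ H (Hobj A) A (pV A) (val x).

Lemma ec_lin (A : qobj nondeg) (a : F2) x y : ec A (a *: x + y) = a *: ec A x + ec A y.
Proof. by rewrite /ec -fmor_lin. Qed.

Lemma ec_nat (A B : qobj nondeg) (s : span A B) x :
  ec B (fmor (res (Fext H)) s x) = fmor H s (ec A x).
Proof.
rewrite /ec /=.
rewrite -(@fmor_comp _ H (Hobj A) (Hobj B) B (ext s) (pV B) (extl s) (L_pext s)).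
by rewrite -(@fmor_comp _ H (Hobj A) A B (pV A) s (extl s) (L_sp s)).
Qed.

Lemma ie_fix (A : qobj nondeg) (y : fobj H A) :
  EH H A (@fmor _ H A (Hobj A) (iV A) y) == @fmor _ H A (Hobj A) (iV A) y.
Proof.
apply/eqP; symmetry.
exact: (@fmor_comp _ H A (Hobj A) (Hobj A) (iV A) (eV A) (iV A) (L_ie A)).
Qed.

Definition dc (A : qobj nondeg) (y : fobj H A) : fobj (res (Fext H)) A :=
  exist _ (@fmor _ H A (Hobj A) (iV A) y) (ie_fix A y).

Lemma dc_lin (A : qobj nondeg) (a : F2) x y : dc A (a *: x + y) = a *: dc A x + dc A y.
Proof. by apply: val_inj; rewrite /= fmor_lin. Qed.

Lemma dc_nat (A B : qobj nondeg) (s : span A B) y :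
  dc B (fmor H s y) = fmor (res (Fext H)) s (dc A y).
Proof.
apply: val_inj => /=.
rewrite -(@fmor_comp _ H A B (Hobj B) s (iV B) (ir s) (L_is s)).
by rewrite -(@fmor_comp _ H A (Hobj A) (Hobj B) (iV A) (ext s) (ir s) (L_ei s)).
Qed.

Lemma ess_iso : qnat_iso (res (Fext H)) H.
Proof.
exists (QNat _ _ ec ec_lin ec_nat), (QNat _ _ dc dc_lin dc_nat); split => A x /=.
  apply: val_inj => /=; rewrite /ec.
  rewrite -(@fmor_comp _ H (Hobj A) A (Hobj A) (pV A) (iV A) (eV A) (L_ip A)).
  by apply/eqP; exact: (valP x).
rewrite /ec /=.
rewrite -(@fmor_comp _ H A (Hobj A) A (iV A) (pV A) (span_id A) (L_pi A)).
by rewrite fmor_id.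
Qed.
End EssIso.

Theorem theorem4p13 :
  [/\ (* faithful *)
      (forall (F G : Fiso) (eta eta' : qnat F G),
          (forall A x, ncomp (res_nat eta) A x = ncomp (res_nat eta') A x) ->
          forall A x, ncomp eta A x = ncomp eta' A x),
      (* full *)
      (forall (F G : Fiso) (theta : qnat (res F) (res G)),
          exists eta : qnat F G,
            forall A x, ncomp (res_nat eta) A x = ncomp theta A x) &
      (* essentially surjective *)
      (forall H : FuncSq, exists F : Fiso, qnat_iso (res F) H)].
Proof.
split.
- move=> F G eta eta' h A x.
  have ex : x = @fmor _ F (incl (Hobj A)) A (pV A) (@fmor _ F A (incl (Hobj A)) (iV A) x).
    rewrite -(@fmor_comp _ F A (incl (Hobj A)) A (iV A) (pV A) (span_id A) (L_pi A)).
    by rewrite fmor_id.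
  rewrite ex (ncomp_nat _ _ _ eta) (ncomp_nat _ _ _ eta'); congr (fmor _ _ _); exact: (h (Hobj A)).
- by move=> F G theta; exists (fullnat _ _ theta); exact: fullnat_res.
- by move=> H; exists (Fext H); exact: ess_iso.
Qed.
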